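(* For all $k \ge 2$ and $n \ge 6$, \[ w(n,k) = w(n-1,k-1) + w(n-2,k), \] where $w(m,j)$ is the number of compositions of $m$ with all parts in $\{1,2\}$ having exactly $j$ water cells.
   Context: A composition of $n \ge 0$ is a finite sequence $(c_1,\dots,c_t)$ of positive integers with $c_1+\cdots+c_t=n$; the empty composition is the unique composition of $0$. Let $C_{12}(n)$ be the set of compositions of $n$ all of whose parts lie in $\{1,2\}$. The number of water cells of a composition $(c_1,\dots,c_t)$ is $\sum_{i=1}^{t} \max\bigl(0, \min(\max_{j \le i} c_j, \max_{j \ge i} c_j) - c_i\bigr)$ (the number of unit squares that would hold water poured over its bargraph, in which column $i$ has height $c_i$). For $n,k \ge 0$, $W(n,k)$ is the set of compositions in $C_{12}(n)$ with exactly $k$ water cells and $w(n,k)=|W(n,k)|$. *)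

(* Defs.v *)
From mathcomp Require Import all_boot.
Set Implicit Arguments. Unset Strict Implicit. Unset Printing Implicit Defensive.

(* A composition is a seq nat of positive parts; its bargraph has column i of
   height c_i. *)

Definition water_at (c : seq nat) (i : nat) : nat :=
  let lmax := \max_(j <- take i.+1 c) j in
  let rmax := \max_(j <- drop i c) j in
  minn lmax rmax - nth 0 c i.   (* truncated subtraction = max(0, .) *)

Definition water (c : seq nat) : nat :=
  \sum_(i < size c) water_at c i.

Definition is_comp12 (n : nat) (c : seq nat) : bool :=
  all (fun x => (x == 1) || (x == 2)) c && (sumn c == n).

Fixpoint seqs12 (m : nat) : seq (seq nat) :=
  if m is m'.+1 then [seq x :: s | x <- [:: 1; 2], s <- seqs12 m'] else [:: [::]].

(* Every composition in C_{12}(n) has at most n parts, so this finite list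
   (without duplicates) contains all candidates. *)
Definition cands12 (n : nat) : seq (seq nat) :=
  flatten [seq seqs12 m | m <- iota 0 n.+1].

Definition Wset (n k : nat) : seq (seq nat) :=
  [seq c <- cands12 n | is_comp12 n c && (water c == k)].

Definition w (n k : nat) : nat := size (undup (Wset n k)).

(* Main.v *)
Require Import Defs.
From mathcomp Require Import all_boot.
From mathcomp Require Import zify.

Set Implicit Arguments. Unset Strict Implicit. Unset Printing Implicit Defensive.

Notation a12 := (all (fun x : nat => (x == 1) || (x == 2))).

Fixpoint L (n : nat) : seq (seq nat) :=
  match n with
  | 0 => [:: [::]]
  | 1 => [:: [:: 1]]
  | (m.+1 as m1).+1 => map (cons 1) (L m1) ++ map (cons 2) (L m)
  end.

Lemma mem_mapcons (x y : nat) c s :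
  (y :: c \in map (cons x) s) = (y == x) && (c \in s).
Proof.
apply/mapP/andP => [[d ds [-> ->]]|[/eqP -> cs]]; first by split.
by exists c.
Qed.

Lemma L_SS m : L m.+2 = map (cons 1) (L m.+1) ++ map (cons 2) (L m).
Proof. by []. Qed.

Lemma nil_mapcons (x : nat) s : ([::] \in map (cons x) s) = false.
Proof. by apply/negbTE/negP => /mapP []. Qed.

Lemma memL n c : (c \in L n) = a12 c && (sumn c == n).
Proof.
move: c; elim/ltn_ind: n => n IH c.
case: n IH => [|[|m]] IH.
- case: c => [|x c] //=; rewrite in_cons in_nil orbF /=.
  by case: x => [|x] //=; rewrite addSn andbF.
- case: c => [|x c] //=; rewrite in_cons in_nil orbF /= eqseq_cons.
  case: x => [|[|[|x]]] //=.
  + rewrite add1n eqSS; case: c => [|y c] //=.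
    by case: y => [|y] //=; rewrite addSn andbF.
  + by rewrite addnC !addnS /= andbF.
- rewrite L_SS mem_cat; case: c => [|x c]; first by rewrite !nil_mapcons.
  rewrite !mem_mapcons !IH //=.
  case: x => [|[|[|x]]] //=.
  by rewrite orbF add1n eqSS.
Qed.

Lemma uniqL n : uniq (L n).
Proof.
elim/ltn_ind: n => n IH.
case: n IH => [|[|m]] IH //.
rewrite L_SS cat_uniq !map_inj_uniq ?IH //; try by move=> a b [].
rewrite andbT /=; apply/hasPn => d /mapP [e _ ->].
by rewrite mem_mapcons.
Qed.

Lemma mem_seqs12 m c : (c \in seqs12 m) = (size c == m) && a12 c.
Proof.
elim: m c => [|m IH] c.
- by case: c.
- rewrite /= cats0 mem_cat.
  case: c => [|x c]; first by rewrite !nil_mapcons.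
  rewrite !mem_mapcons !IH /= eqSS.
  case: x => [|[|[|x]]] //=; rewrite ?andbF ?orbF //.
Qed.

Lemma size_le_sum c : a12 c -> size c <= sumn c.
Proof.
elim: c => [|x c IH] //= /andP [Hx Hc].
have := IH Hc; case/orP: Hx => /eqP -> ; lia.
Qed.

Lemma cands_mem n c : a12 c -> sumn c = n -> c \in cands12 n.
Proof.
move=> Ha Hs; apply/flattenP; exists (seqs12 (size c)).
  apply/mapP; exists (size c) => //.
  by rewrite mem_iota /= add0n ltnS -Hs size_le_sum.
by rewrite mem_seqs12 eqxx Ha.
Qed.

Lemma w_count n k : w n k = count (fun c => water c == k) (L n).
Proof.
rewrite /w.
have Hu : uniq (filter (fun c => water c == k) (L n)) by rewrite filter_uniq // uniqL.
rewrite -size_filter.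
apply/perm_size/uniq_perm; [exact: undup_uniq | exact: Hu | ] => c.
rewrite mem_undup /Wset !mem_filter memL /is_comp12.
case Hc: (a12 c && (sumn c == n)); last by rewrite !andbF.
case/andP: Hc => Ha /eqP Hs.
by rewrite andTb andbT (cands_mem Ha Hs) andbT.
Qed.

Definition mx (s : seq nat) := \max_(j <- s) j.

Lemma mx_cons x s : mx (x :: s) = maxn x (mx s).
Proof. by rewrite /mx big_cons. Qed.

Fixpoint hh (m : nat) (c : seq nat) : nat :=
  if c is x :: c' then (minn (maxn m x) (maxn x (mx c')) - x) + hh (maxn m x) c' else 0.

Lemma hhE m c : hh m c =
  \sum_(i < size c) (minn (maxn m (mx (take i.+1 c))) (mx (drop i c)) - nth 0 c i).
Proof.
elim: c m => [|x c IH] m; first by rewrite big_ord0.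
rewrite /= big_ord_recl /= IH.
congr (_ + _).
  by rewrite take0 !mx_cons /mx big_nil maxn0.
apply: eq_bigr => i _.
by rewrite /= mx_cons maxnA.
Qed.

Lemma water_hh c : water c = hh 0 c.
Proof.
rewrite hhE /water; apply: eq_bigr => i _.
by rewrite /water_at max0n.
Qed.

Lemma mx_prop c : a12 c -> mx c <= 2 /\ (mx c == 2) = (2 \in c).
Proof.
elim: c => [|x c IH] /=; first by rewrite /mx big_nil.
case/andP => Hx Hc; case: (IH Hc) => H1 H2.
rewrite mx_cons in_cons -H2.
case/orP: Hx => /eqP ->; split; try lia.
Qed.

Lemma hh0_1 c : a12 c -> hh 0 c = hh 1 c.
Proof.
case: c => [|x c] //= /andP [Hx _].
by case/orP: Hx => /eqP ->.
Qed.

Lemma hh11 c : hh 1 (1 :: c) = hh 1 c.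
Proof. rewrite /=; have -> : minn 1 (maxn 1 (mx c)) - 1 = 0 by lia. by []. Qed.

Lemma hh12 c : hh 1 (2 :: c) = hh 2 c.
Proof. rewrite /=; have -> : minn 2 (maxn 2 (mx c)) - 2 = 0 by lia. by []. Qed.

Lemma hh22 c : hh 2 (2 :: c) = hh 2 c.
Proof. rewrite /=; have -> : minn 2 (maxn 2 (mx c)) - 2 = 0 by lia. by []. Qed.

Lemma hh21 c : a12 c -> hh 2 (1 :: c) = (2 \in c) + hh 2 c.
Proof.
move=> Ha; case: (mx_prop Ha) => H1 H2.
rewrite /= -H2; congr (_ + _).
by case: (ltngtP (mx c) 2); lia.
Qed.

Lemma hh2_no2 c : a12 c -> 2 \notin c -> hh 2 c = 0.
Proof.
elim: c => [|x c IH] // /andP [Hx Hc]; rewrite in_cons negb_or => /andP [H1 H2].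
case/orP: Hx => /eqP Ex; last by rewrite Ex in H1.
by rewrite Ex hh21 // (negbTE H2) IH.
Qed.

Definition A n k := count (fun c => hh 1 c == k) (L n).
Definition G n k := count (fun c => hh 2 c == k) (L n).

Lemma A_rec m k : A m.+2 k = A m.+1 k + G m k.
Proof.
rewrite /A /G L_SS count_cat !count_map; congr (_ + _).
  by apply: eq_count => c; exact: (congr1 (fun t => t == k) (hh11 c)).
by apply: eq_count => c; exact: (congr1 (fun t => t == k) (hh12 c)).
Qed.

Lemma G_rec m k : 2 <= k -> G m.+2 k = G m.+1 k.-1 + G m k.
Proof.
move=> hk.
rewrite /G L_SS count_cat !count_map; congr (_ + _).
  apply: eq_in_count => c; rewrite memL => /andP [Ha _].
  change ((hh 2 (1 :: c) == k) = (hh 2 c == k.-1)).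
  rewrite hh21 //.
  case H2: (2 \in c); first by rewrite add1n; case: k hk => [|k] //= _; rewrite eqSS.
  by rewrite hh2_no2 ?H2 //; case: k hk => [|[|k]].
by apply: eq_count => c; exact: (congr1 (fun t => t == k) (hh22 c)).
Qed.

Lemma A0 k : A 0 k.+1 = 0. Proof. by []. Qed.
Lemma G0 k : G 0 k.+1 = 0. Proof. by []. Qed.
Lemma A1 k : A 1 k.+1 = 0.
Proof. change ((hh 1 [:: 1] == k.+1) + 0 = 0). by rewrite hh11. Qed.
Lemma G1 k : G 1 k.+1 = 0.
Proof. change ((hh 2 [:: 1] == k.+1) + 0 = 0). by rewrite hh21. Qed.
Lemma A2 k : A 2 k.+1 = 0.
Proof. by rewrite A_rec A1 G0. Qed.

Lemma A_main n k : 2 <= k -> A n.+2 k = A n.+1 k.-1 + A n k.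
Proof.
case: k => [|[|k]] // _; rewrite [k.+2.-1]/=.
elim: n => [|n' IH]; first by rewrite A2 A1 A0.
case: n' IH => [|m] IH; first by rewrite A_rec !A2 G1 A1.
have e1 := A_rec m.+1 k.+1; have e2 := A_rec m k.+2; have e3 := A_rec m.+2 k.+2.
have e4 : G m.+2 k.+2 = G m.+1 k.+1 + G m k.+2 by rewrite G_rec.
lia.
Qed.

Theorem theorem2p4 (n k : nat) (hk : 2 <= k) (hn : 6 <= n) :
  w n k = w (n - 1) (k - 1) + w (n - 2) k.
Proof.
have HwA : forall n k, w n k = A n k.
  move=> n' k'; rewrite w_count /A; apply: eq_in_count => c.
  by rewrite memL => /andP [Ha _] /=; rewrite water_hh hh0_1.
have -> : n = (n - 2).+2 by lia.
have -> : (n - 2).+2 - 1 = (n - 2).+1 by lia.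
have -> : (n - 2).+2 - 2 = n - 2 by lia.
by rewrite !HwA subn1 A_main.
Qed.
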